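(* Let $n\ge3$ be an odd integer. The cycle $C_n$ admits an optimal extended irregular dominating set if and only if there exists a strong starter in $\mathbb{Z}_n$.
   Context: $C_n$ is the cycle on $n$ vertices. In a finite simple graph $\Gamma=(V,E)$ with distance $d$, a vertex $v$ carrying a non-negative integer label $\ell$ dominates (covers) exactly the vertices $u$ with $d(u,v)=\ell$; a vertex labeled $0$ dominates only itself. For $k\ge0$, a $k$-extended irregular dominating set is a set $S\subseteq V$ of $k$ vertices with a labeling $\lambda:S\to\mathbb{Z}_{\ge0}$ with distinct labels, such that every vertex of $V$ is dominated by some vertex of $S$; it is assumed that some vertex of $S$ has label $0$. $\gamma_e(\Gamma)$ is the minimum cardinality of such a set; a $k$-extended irregular dominating set is optimal if $k=\gamma_e(\Gamma)$. For an additive abelian group $G$ of odd order $g$, a starter is a set of unordered pairs $\{\{x_i,y_i\}:1\le i\le (g-1)/2\}$ such that $\{x_i,y_i: 1\le i\le (g-1)/2\}=G\setminus\{0\}$ and $\{\pm(x_i-y_i):1\le i\le (g-1)/2\}=G\setminus\{0\}$; it is strong if moreover the sums $x_i+y_i$ are pairwise distinct and all nonzero. *)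

(* Defs.v *)
From mathcomp Require Import all_boot all_order all_algebra.
Set Implicit Arguments. Unset Strict Implicit. Unset Printing Implicit Defensive.
Import GRing.Theory.

(* The cycle C_n on vertex set 'I_n = {0,...,n-1}, vertex i adjacent to
   i+1 mod n.  Its graph distance is the cyclic distance
   d(u,v) = min((u - v) mod n, (v - u) mod n). *)
Definition cycle_dist (n : nat) (u v : 'I_n) : nat :=
  minn ((u + n - v) %% n) ((v + n - u) %% n).

Definition dominates (n : nat) (lam : 'I_n -> nat) (v u : 'I_n) : bool :=
  cycle_dist u v == lam v.

Definition is_eids (n : nat) (S : {set 'I_n}) (lam : 'I_n -> nat) : Prop :=
  {in S &, injective lam} /\
  (exists2 v, v \in S & lam v = 0%N) /\
  (forall u : 'I_n, exists2 v, v \in S & dominates lam v u).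

Definition optimal_eids (n : nat) (S : {set 'I_n}) (lam : 'I_n -> nat) : Prop :=
  is_eids S lam /\
  (forall (S' : {set 'I_n}) (lam' : 'I_n -> nat), is_eids S' lam' -> #|S| <= #|S'|).

(* A starter in Z_n (n odd): pairs {x i, y i}, i < (n-1)/2. *)
Definition starter (n : nat) (x y : 'I_(n.-1./2) -> 'Z_n) : Prop :=
  [set z | [exists i, (z == x i) || (z == y i)]] = [set~ 0%R] /\
  [set z | [exists i, (z == x i - y i)%R || (z == y i - x i)%R]] = [set~ 0%R].

Definition strong_starter (n : nat) (x y : 'I_(n.-1./2) -> 'Z_n) : Prop :=
  starter x y /\ injective (fun i => (x i + y i)%R) /\
  (forall i, (x i + y i)%R != 0%R).

(* Main.v *)
Require Import Defs.
From mathcomp Require Import all_boot all_order all_algebra zify ring.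
Set Implicit Arguments. Unset Strict Implicit. Unset Printing Implicit Defensive.
Import GRing.Theory.
Local Open Scope ring_scope.

Section Cyc.
Variable k : nat.
Local Notation n := k.+2.
Local Notation Z := 'I_n.

Lemma valN (z : 'I_n) : val (- z : Z) = ((n - z) %% n)%N.
Proof. by []. Qed.

Lemma valB (u v : 'I_n) : val (u - v : Z) = ((u + n - v) %% n)%N.
Proof.
rewrite /= modnDmr addnBA //; exact: ltnW.
Qed.

Definition nd (z : Z) : nat := minn (val z) (val (- z)).

Lemma cdE (u v : 'I_n) : cycle_dist u v = nd (u - v).
Proof. rewrite /cycle_dist /nd valB opprB valB //. Qed.
Hypothesis hk : odd k.
Local Notation m := (k.+1)./2.
Lemma Hn : (n = m.*2.+1)%N.
Proof.
have := odd_double_half k.+1; rewrite /= hk /= add0n => ->; done.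
Qed.

Lemma valN' (z : Z) : val z != 0%N -> val (- z) = (n - z)%N.
Proof.
move=> nz; rewrite valN modn_small //.
have hz : (nat_of_ord z < n)%N := ltn_ord z. move: nz hz; rewrite /=. lia. Qed.

Lemma valN0 (z : Z) : val z = 0%N -> z = 0.
Proof. by move=> h; apply/val_inj. Qed.

Lemma nd_le (z : Z) : (nd z <= m)%N.
Proof.
rewrite /nd; case: (eqVneq (val z) 0%N) => [->|nz]; first by rewrite min0n.
rewrite valN' //; have hz : (nat_of_ord z < n)%N := ltn_ord z. move: nz hz; rewrite /=; lia.
Qed.

Lemma ndN (z : Z) : nd (- z) = nd z.
Proof. by rewrite /nd opprK minnC. Qed.

Lemma nd0 : nd 0 = 0%N.
Proof. by rewrite /nd oppr0. Qed.

Lemma ndE (z : Z) : z = (nd z)%:R \/ z = - (nd z)%:R.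
Proof.
rewrite /nd /minn; case: ifP => _.
  by left; rewrite natr_Zp.
by right; rewrite natr_Zp opprK.
Qed.

Lemma nd_nat (l : nat) : (l <= m)%N -> nd (l%:R) = l.
Proof.
move=> lm; rewrite /nd.
have vl : nat_of_ord (l%:R : Z) = l by rewrite Zp_nat /= modn_small; lia.
case: (eqVneq l 0%N) => [->|l0]; first by apply: nd0.
rewrite valN' /= vl; first lia.
by [].
Qed.

Lemma nd_eq0 (z : Z) : nd z = 0%N -> z = 0.
Proof. by move=> h; case: (ndE z); rewrite h => ->; rewrite ?oppr0. Qed.

Lemma nd_inj (a b : Z) : nd a = nd b -> a = b \/ a = - b.
Proof.
move=> e; case: (ndE a) => ->; case: (ndE b) => ->; rewrite e ?opprK; tauto.
Qed.

Lemma two_half : (2%:R * (m.+1)%:R : Z) = 1.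
Proof.
rewrite -natrM Zp_nat; apply/val_inj => /=.
have -> : (2 * m.+1 = 1 + n)%N by rewrite Hn; lia.
by rewrite modnDr.
Qed.


Lemma key (S : {set Z}) lam : is_eids S lam ->
  exists V : Z -> Z, (forall z, V z \in S /\ lam (V z) = nd z) /\
    (forall u, exists z, u = V z + z) /\ injective (fun z => V z + z).
Proof.
case=> linj [[u0 u0S lu0] dom].
pose D u := odflt u [pick v in S | dominates lam v u].
have hD : forall u, D u \in S /\ lam (D u) = nd (u - D u).
  move=> u; rewrite /D; case: pickP => [v /andP [vS /eqP dv]|none] /=.
    by split=> //; rewrite -dv cdE.
  by exfalso; case: (dom u) => v vS dv; have := none v; rewrite vS dv.
pose h u := u - D u.
have hinj : injective h.
  move=> u u' e; have [S1 l1] := hD u; have [S2 l2] := hD u'.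
  have eD : D u = D u' by apply: linj => //; rewrite l1 l2; congr nd; exact: e.
  by move: e; rewrite /h eD => /addIr.
have [g hg gh] := injF_bij hinj.
have E z : D (g z) + z = g z.
  by rewrite -{2}(gh z) /h addrC subrK.
exists (fun z => D (g z)); split; last split.
- move=> z; have [S1 l1] := hD (g z); split => //; rewrite l1; congr nd; exact: gh z.
- by move=> u; exists (h u); rewrite E hg.
- by move=> a b; rewrite !E; apply: (can_inj gh).
Qed.

Lemma lower (S : {set Z}) lam : is_eids S lam -> (m.+1 <= #|S|)%N.
Proof.
move=> /key [V [HV _]].
pose f (j : 'I_m.+1) : Z := V ((j : nat)%:R).
have finj : injective f.
  move=> i j e; apply/val_inj.
  have := (HV (i : nat)%:R).2; have := (HV (j : nat)%:R).2.
  rewrite /f in e; rewrite e => -> ; rewrite !nd_nat // -ltnS //.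
have : #|f @: [set: 'I_m.+1]| = m.+1 by rewrite card_imset // cardsT card_ord.
move=> <-; apply: subset_leq_card; apply/subsetP => v /imsetP [j _ ->]; exact: (HV _).1.
Qed.


Lemma half_E (t : Z) : t = (t *+ 2) * (m.+1)%:R.
Proof. by rewrite -(mulr_natr t 2) -mulrA two_half mulr1. Qed.

Lemma half_inj (a b : Z) : a *+ 2 = b *+ 2 -> a = b.
Proof. by move=> e; rewrite (half_E a) e -half_E. Qed.

Lemma c_nz (i : 'I_m) : ((i.+1)%:R : Z) *+ 2 != 0.
Proof.
rewrite -(mulr_natr _ 2) -natrM; apply/eqP => /(congr1 val).
rewrite Zp_nat /=; rewrite modn_small.
  by rewrite muln2.
have := ltn_ord i; have := Hn; change (uphalf k) with ((k.+1)./2); lia.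
Qed.

Definition ssZ (x y : 'I_m -> Z) : Prop :=
  ([set z | [exists i, (z == x i) || (z == y i)]] = [set~ 0] /\
  [set z | [exists i, (z == x i - y i) || (z == y i - x i)]] = [set~ 0]) /\
  injective (fun i => (x i + y i)) /\ (forall i, (x i + y i) != 0).
Lemma ssZE (x y : 'I_m -> Z) : ssZ x y -> @strong_starter n x y.
Proof. exact. Qed.
Lemma ssZE' (x y : 'I_m -> Z) : @strong_starter n x y -> ssZ x y.
Proof. exact. Qed.

Lemma dir1 (S : {set Z}) lam : is_eids S lam ->
  exists x y : 'I_m -> Z, ssZ x y.
Proof.
move=> /[dup] E /key [V [HV [Hsur Winj]]].
case: E => linj [[u0 u0S lu0] _].
pose W z := V z + z.
have V0 : V 0 = u0.
  by apply: linj => //; [exact: (HV 0).1 | rewrite (HV 0).2 nd0 lu0].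
have W0 : W 0 = u0 by rewrite /W V0 addr0.
pose c (i : 'I_m) : Z := (i.+1)%:R.
have ndc i : nd (c i) = i.+1 by apply: nd_nat; exact: ltn_ord.
have Vc i : V (- c i) = V (c i).
  by apply: linj; [exact: (HV _).1|exact: (HV _).1|rewrite (HV _).2 (HV _).2 ndN].
exists (fun i => V (c i) - c i - u0), (fun i => V (c i) + c i - u0).
split; [split|split].
- apply/setP => z; rewrite !inE; apply/existsP/idP.
  + case=> i /orP [/eqP ->|/eqP ->]; apply/negP; rewrite subr_eq0 => /eqP e.
      have : W (- c i) = W 0 by rewrite W0 /W Vc; exact: e.
      move/Winj => /eqP; rewrite oppr_eq0 => /eqP ci.
      by have := ndc i; rewrite ci nd0.
    have : W (c i) = W 0 by rewrite W0 /W; exact: e.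
    move/Winj => ci.
    by have := ndc i; rewrite ci nd0.
  + move=> znz; have [w ew] := Hsur (z + u0).
    have wl : (nd w <= m)%N by apply: nd_le.
    have w0 : nd w != 0%N.
      apply/eqP => /nd_eq0 w0; move: ew; rewrite w0 -/(W 0) W0 => /eqP.
      by rewrite -subr_eq0 addrK (negbTE znz).
    have lt : ((nd w).-1 < m)%N by lia.
    exists (Ordinal lt).
    have cE : c (Ordinal lt) = (nd w)%:R by rewrite /c /= prednK // lt0n.
    have ez : z = V w + w - u0 by rewrite -ew addrK.
    case: (ndE w) => we.
      by apply/orP; right; rewrite ez cE -we.
    apply/orP; left; rewrite ez -Vc cE -we; apply/eqP; done.
- apply/setP => z; rewrite !inE; apply/existsP/idP.
  + case=> i /orP [/eqP ->|/eqP ->].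
      have -> : V (c i) - c i - u0 - (V (c i) + c i - u0) = - (c i *+ 2) by ring.
      by rewrite oppr_eq0 c_nz.
    have -> : V (c i) + c i - u0 - (V (c i) - c i - u0) = c i *+ 2 by ring.
    exact: c_nz.
  + move=> znz; pose w := z * (m.+1)%:R.
    have zw : z = w *+ 2.
      by rewrite /w -(mulr_natr _ 2) -mulrA (mulrC _ 2%:R) two_half mulr1.
    have wl : (nd w <= m)%N by apply: nd_le.
    have w0 : nd w != 0%N.
      apply/eqP => /nd_eq0 w0; move: znz; by rewrite zw w0 mul0rn eqxx.
    have lt : ((nd w).-1 < m)%N by lia.
    exists (Ordinal lt).
    have cE : c (Ordinal lt) = (nd w)%:R by rewrite /c /= prednK // lt0n.
    rewrite cE; case: (ndE w) => we; apply/orP.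
      right; apply/eqP; rewrite zw {1}we; ring.
    left; apply/eqP; rewrite zw {1}we; ring.
- move=> i j /= e.
  have h1 t : (V (c t) - c t - u0) + (V (c t) + c t - u0) = (V (c t) - u0) *+ 2 by ring.
  move: e; rewrite !h1 => /half_inj/addIr e2.
  have := (HV (c i)).2; rewrite e2 (HV (c j)).2 !ndc => -[] eij.
  exact: val_inj.
- move=> i; apply/eqP => e.
  have : (V (c i) - u0) *+ 2 = 0 *+ 2 by rewrite mul0rn -e; ring.
  move/half_inj/eqP; rewrite subr_eq0 => /eqP vi.
  by have := (HV (c i)).2; rewrite vi lu0 ndc.
Qed.

Lemma dir2 (x y : 'I_m -> Z) : ssZ x y ->
  exists (S : {set Z}) (lam : Z -> nat), is_eids S lam /\ (#|S| <= m.+1)%N.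
Proof.
case=> [[st1 st2] [sinj snz]].
pose e i := (y i - x i) * (m.+1)%:R.
pose v i := x i + e i.
pose l i := nd (e i).
have he i : e i *+ 2 = y i - x i by rewrite /e [RHS]half_E; ring.
have hv2 i : v i *+ 2 = x i + y i.
  by rewrite /v mulrnDl he; ring.
have d_nz i : y i - x i != 0.
  have : y i - x i \in [set z | [exists i, (z == x i - y i) || (z == y i - x i)]].
    by rewrite inE; apply/existsP; exists i; rewrite eqxx orbT.
  by rewrite st2 !inE.
have e_nz i : e i != 0.
  by apply: contraNneq (d_nz i); rewrite -he => ->; rewrite mul0rn.
have l_pos i : l i != 0%N by apply: contra (e_nz i) => /eqP /nd_eq0 ->.
have vinj : injective v.
  by move=> i j ev; apply: sinj => /=; rewrite -!hv2 ev.
have v_nz i : v i != 0.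
  by apply: contra (snz i) => /eqP vi; rewrite -hv2 vi mul0rn.
pose F (p : 'I_m * bool) := if p.2 then x p.1 - y p.1 else y p.1 - x p.1.
have Fim : F @: setT = [set~ 0].
  apply/setP => z; rewrite -st2 inE; apply/imsetP/existsP.
    by case=> [[i b]] _ ->; exists i; case: b; rewrite /F /= eqxx ?orbT.
  by case=> i /orP [/eqP ->|/eqP ->]; [exists (i, true) | exists (i, false)].
have /imset_injP Fi : #|F @: setT| == #|[set: 'I_m * bool]|.
  rewrite Fim cardsC1 cardsT card_prod card_ord card_bool card_ord.
  by apply/eqP; have := Hn; lia.
have Finj : injective F by move=> a b; apply: Fi; rewrite inE.
have linj : injective l.
  move=> i j /nd_inj [] eij.
    have : F (i, false) = F (j, false) by rewrite /F /= -!he eij.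
    by move/Finj => [].
  have : F (i, false) = F (j, true) by rewrite /F /= -he eij mulNrn he opprB.
  by move/Finj.
pose lam u := if [pick i | v i == u] is Some i then l i else 0%N.
have lamv i : lam (v i) = l i.
  rewrite /lam; case: pickP => [j /eqP /vinj -> // | none].
  by have := none i; rewrite eqxx.
have lam0 : lam 0 = 0%N.
  rewrite /lam; case: pickP => [j /eqP vj|//].
  by have := v_nz j; rewrite vj eqxx.
exists (0 |: v @: [set: 'I_m]), lam; split; last first.
  rewrite cardsU1; apply: leq_trans (leq_add (leq_b1 _) (leq_imset_card _ _)) _.
  by rewrite cardsT card_ord.
split; last split.
- move=> a b; rewrite !inE => /predU1P [->|/imsetP [i _ ->]] /predU1P [->|/imsetP [j _ ->]];
    rewrite ?lam0 ?lamv //.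
  + by move=> h; have := l_pos j; rewrite -h eqxx.
  + by move=> h; have := l_pos i; rewrite h eqxx.
  + by move/linj => ->.
- by exists 0; [rewrite setU11 | exact: lam0].
- move=> u; case: (eqVneq u 0) => [->|u0].
    by exists 0; rewrite ?setU11 // /dominates lam0 cdE subrr nd0.
  have : u \in [set~ (0 : Z)] by rewrite !inE.
  rewrite -st1 inE => /existsP [i /orP [/eqP ->|/eqP ->]]; exists (v i);
    rewrite ?inE ?imset_f ?orbT // /dominates lamv cdE.
    by rewrite (_ : x i - v i = - e i) ?ndN //; rewrite /v; ring.
  have ey : y i = x i + e i *+ 2 by rewrite he; ring.
  by rewrite (_ : y i - v i = e i) // ey /v; ring.
Qed.

End Cyc.

Local Close Scope ring_scope.

Theorem proposition4p5 (n : nat) :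
  odd n -> 3 <= n ->
  (exists (S : {set 'I_n}) (lam : 'I_n -> nat), optimal_eids S lam) <->
  (exists x y : 'I_(n.-1./2) -> 'Z_n, strong_starter x y).
Proof.
case: n => [|[|k]] //= ok _.
rewrite negbK in ok.
split.
- move=> [S [lam [E _]]]; have [x [y H]] := dir1 ok E.
  by exists x, y; apply: ssZE.
- move=> [x [y H]]; have [S [lam [E c]]] := dir2 ok (ssZE' H).
  exists S, lam; split => // S' lam' E'; exact: leq_trans c (lower ok E').
Qed.
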